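(* Let $\mathbf{X}\in\mathbb{R}^{M\times N_x}$, $\mathbf{Y}\in\mathbb{R}^{M\times N_y}$ with $\mathbf{C}\mathbf{X}\neq0$, $\mathbf{C}\mathbf{Y}\neq0$, and let $\mathbf{K}_X=\mathbf{C}\mathbf{X}\mathbf{X}^\top\mathbf{C}$, $\mathbf{K}_Y=\mathbf{C}\mathbf{Y}\mathbf{Y}^\top\mathbf{C}$. Then $$\frac{\mathrm{CKA}(\mathbf{K}_X,\mathbf{K}_Y)}{\sqrt{\operatorname{rank}(\mathbf{K}_X)\operatorname{rank}(\mathbf{K}_Y)}}\le \mathrm{NBS}(\mathbf{K}_X,\mathbf{K}_Y)^2\le \min\big(\operatorname{rank}(\mathbf{K}_X),\operatorname{rank}(\mathbf{K}_Y)\big)\,\mathrm{CKA}(\mathbf{K}_X,\mathbf{K}_Y).$$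
   Context: $\mathbf{C}=\mathbf{I}-\tfrac1M\mathbf{1}\mathbf{1}^\top$ is the $M\times M$ centering matrix. For PSD $\mathbf{A}$, $\mathbf{A}^{1/2}$ is its unique PSD square root; the fidelity is $\mathcal{F}(\mathbf{A},\mathbf{B})=\operatorname{Tr}[(\mathbf{A}^{1/2}\mathbf{B}\mathbf{A}^{1/2})^{1/2}]$ and the normalized Bures similarity is $\mathrm{NBS}(\mathbf{A},\mathbf{B})=\mathcal{F}(\mathbf{A},\mathbf{B})/\sqrt{\operatorname{Tr}\mathbf{A}\operatorname{Tr}\mathbf{B}}$. Centered kernel alignment is $\mathrm{CKA}(\mathbf{A},\mathbf{B})=\operatorname{Tr}[\mathbf{A}\mathbf{B}]/\sqrt{\operatorname{Tr}[\mathbf{A}^2]\operatorname{Tr}[\mathbf{B}^2]}$. *)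

(* Defs.v *)
From HB Require Import structures.
From mathcomp Require Import all_boot all_order all_algebra.
From mathcomp Require Import boolp classical_sets reals.
Set Implicit Arguments. Unset Strict Implicit. Unset Printing Implicit Defensive.
Import Order.TTheory GRing.Theory Num.Theory.
Local Open Scope ring_scope.

Section Defs.
Variable R : realType.

Definition centering (M : nat) : 'M[R]_M :=
  1%:M - (M%:R)^-1 *: const_mx 1.

Definition psd (n : nat) (A : 'M[R]_n) : Prop :=
  A^T = A /\ forall v : 'cV[R]_n, 0 <= (v^T *m A *m v) 0 0.

(* the unique PSD square root of A (chosen by choice; for PSD A it exists
   and is unique) *)
Definition psd_sqrt (n : nat) (A : 'M[R]_n) : 'M[R]_n :=
  xget 0 [set S : 'M[R]_n | psd S /\ S *m S = A].

Definition fidelity (n : nat) (A B : 'M[R]_n) : R :=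
  \tr (psd_sqrt (psd_sqrt A *m B *m psd_sqrt A)).

Definition NBS (n : nat) (A B : 'M[R]_n) : R :=
  fidelity A B / Num.sqrt (\tr A * \tr B).

Definition CKA (n : nat) (A B : 'M[R]_n) : R :=
  \tr (A *m B) / Num.sqrt (\tr (A *m A) * \tr (B *m B)).

End Defs.

(* Main.v *)
Require Import Defs.
From HB Require Import structures.
From mathcomp Require Import all_boot all_order all_algebra.
From mathcomp Require Import boolp classical_sets reals.
From mathcomp Require Import complex ring lra.
Import Order.TTheory GRing.Theory Num.Theory Num.Def.
Local Open Scope ring_scope.

Section Sc.
Variable R : realType.

Lemma sum_sq_le n (f : 'I_n -> R) : (forall i, 0 <= f i) ->
  \sum_i f i ^+ 2 <= (\sum_i f i) ^+ 2.
Proof.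
move=> f0; rewrite [X in _ <= X]expr2 mulr_suml; apply: ler_sum => i _.
rewrite expr2 ler_wpM2l // (bigD1 i) //= lerDl sumr_ge0 //.
Qed.

Lemma cs_supp n (f : 'I_n -> R) : (forall i, 0 <= f i) ->
  (\sum_i f i) ^+ 2 <= (\sum_i ((f i != 0)%:R : R)) * \sum_i f i ^+ 2.
Proof.
move=> f0; set k := \sum_i ((f i != 0)%:R : R).
have k0 : 0 <= k.
  by apply: sumr_ge0 => i _; apply: ler0n.
have [kz|kn0] := eqVneq k 0.
  have s0 : \sum_i f i = 0.
    apply: big1 => i _; apply/eqP; apply: contraT => fi.
    move/eqP: kz; rewrite /k (bigD1 i) //= fi paddr_eq0; first by case=> /eqP; rewrite oner_eq0.
      exact: ler01.
    by apply: sumr_ge0 => j _; apply: ler0n.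
  by rewrite s0 kz expr0n /= mul0r.
set s := \sum_i f i; set q := \sum_i f i ^+ 2.
have H t : 0 <= q - 2 * t * s + t ^+ 2 * k.
  have -> : q - 2 * t * s + t ^+ 2 * k = \sum_i (f i - t * (f i != 0)%:R) ^+ 2.
    rewrite /q /s /k mulr_sumr mulr_sumr -sumrN -!big_split /=; apply: eq_bigr => i _.
    by have [->|_] := eqVneq (f i) 0; rewrite /= ?mulr0 ?mulr1; ring.
  by apply: sumr_ge0 => i _; rewrite sqr_ge0.
have kp : 0 < k by rewrite lt_def kn0.
have := H (s / k).
have -> : q - 2 * (s / k) * s + (s / k) ^+ 2 * k = (k * q - s ^+ 2) / k.
  by field; rewrite kn0.
by rewrite pmulr_lge0 ?invr_gt0 // subr_ge0.
Qed.
End Sc.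

Section Sc2.
Variable R : realType.

Lemma div_le_div (a x y : R) : 0 <= a -> 0 < y -> y <= x -> a / x <= a / y.
Proof.
move=> a0 y0 yx; have x0 : 0 < x by apply: lt_le_trans yx.
by apply: ler_wpM2l => //; rewrite lef_pV2 ?posrE.
Qed.

Lemma final (F t tA tB qA qB rA rB rs m : R) :
  0 <= F -> 0 <= t -> t <= F ^+ 2 -> F ^+ 2 <= rs * t -> 0 <= rs -> rs <= m ->
  0 <= tA -> 0 <= tB -> 0 <= qA -> 0 <= qB -> qA <= tA ^+ 2 -> qB <= tB ^+ 2 ->
  tA ^+ 2 <= rA * qA -> tB ^+ 2 <= rB * qB -> 0 <= rA -> 0 <= rB ->
  t / Num.sqrt (qA * qB) / Num.sqrt (rA * rB) <= (F / Num.sqrt (tA * tB)) ^+ 2 /\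
  (F / Num.sqrt (tA * tB)) ^+ 2 <= m * (t / Num.sqrt (qA * qB)).
Proof.
move=> F0 t0 tF Fr rs0 rm tA0 tB0 qA0 qB0 qtA qtB trA trB rA0 rB0.
rewrite expr_div_n sqr_sqrtr ?mulr_ge0 //.
have m0 : 0 <= m by apply: le_trans rm.
have [tz|tnz] := eqVneq (tA * tB) 0.
  have qz : qA * qB = 0.
    move/eqP: tz; rewrite mulf_eq0 => /orP[] /eqP tz.
      have -> : qA = 0 by rewrite tz expr2 mulr0 in qtA; lra.
      by rewrite mul0r.
    have -> : qB = 0 by rewrite tz expr2 mulr0 in qtB; lra.
    by rewrite mulr0.
  by rewrite tz qz sqrtr0 !invr0 !mulr0 ?mul0r; split.
have tp : 0 < tA * tB by rewrite lt_def tnz mulr_ge0.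
have tAp : 0 < tA by rewrite lt_def tA0 andbT; apply: contraNneq tnz => ->; rewrite mul0r.
have tBp : 0 < tB by rewrite lt_def tB0 andbT; apply: contraNneq tnz => ->; rewrite mulr0.
have qAp : 0 < qA by rewrite lt_def qA0 andbT; apply/eqP => q0; rewrite q0 mulr0 in trA; nra.
have qBp : 0 < qB by rewrite lt_def qB0 andbT; apply/eqP => q0; rewrite q0 mulr0 in trB; nra.
set u := Num.sqrt (qA * qB); set w := Num.sqrt (rA * rB).
have u0 : 0 <= u := sqrtr_ge0 _.
have w0 : 0 <= w := sqrtr_ge0 _.
have u2 : u ^+ 2 = qA * qB by rewrite sqr_sqrtr // mulr_ge0.
have w2 : w ^+ 2 = rA * rB by rewrite sqr_sqrtr // mulr_ge0.
have up : 0 < u by rewrite sqrtr_gt0 mulr_gt0.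
have ut : u <= tA * tB.
  have : u ^+ 2 <= (tA * tB) ^+ 2 by rewrite u2 exprMn ler_pM.
  by rewrite ler_pXn2r // ?nnegrE // ltW.
have F2 : F ^+ 2 <= m * t by apply: (le_trans Fr); apply: ler_wpM2r.
split.
  have [wz|wnz] := eqVneq w 0.
    by rewrite wz invr0 mulr0 divr_ge0 ?sqr_ge0 // ltW.
  have wp : 0 < w by rewrite lt_def wnz w0.
  have uw : tA * tB <= u * w.
    have : (tA * tB) ^+ 2 <= (u * w) ^+ 2.
      rewrite [(u * w) ^+ 2]exprMn u2 w2 exprMn.
      have -> : qA * qB * (rA * rB) = (rA * qA) * (rB * qB) by ring.
      by apply: ler_pM; rewrite ?sqr_ge0.
    by rewrite ler_pXn2r // ?nnegrE // ?mulr_ge0 // ltW.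
  rewrite -mulrA -invfM.
  have H1 := @div_le_div t _ _ t0 tp uw.

  apply: (le_trans H1).
  by apply: ler_wpM2r => //; rewrite invr_ge0 ltW.
rewrite mulrA.
apply: (@le_trans _ _ (m * t / (tA * tB))).
  by apply: ler_wpM2r => //; rewrite invr_ge0 ltW.
by apply: div_le_div => //; rewrite mulr_ge0.
Qed.
End Sc2.

Set Implicit Arguments. Unset Strict Implicit. Unset Printing Implicit Defensive.

Section S.
Variable R : realType.
Local Notation C := (R[i]).
Local Notation toC := (real_complex R).
Local Notation "A ^c" := (map_mx toC A).

Lemma toC_real (x : R) : toC x \is Num.real.
Proof. by apply/complex_realP; exists x. Qed.

Lemma conj_toC (x : R) : (toC x)^* = toC x.
Proof. exact/conj_Creal/toC_real. Qed.

Lemma mapc_real m n (A : 'M[R]_(m, n)) : A^c \is a mxOver Num.real.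
Proof. by apply/mxOverP => i j; rewrite mxE toC_real. Qed.

Lemma mapc_conj m n (A : 'M[R]_(m, n)) : map_mx conjC A^c = A^c.
Proof. by apply/matrixP => i j; rewrite !mxE conj_toC. Qed.

Lemma psd_herm n (A : 'M[R]_n) : psd A -> A^c \is hermsymmx.
Proof.
move=> [At _]; apply: realsym_hermsym; last exact: mapc_real.
apply/is_hermitianmxP; by rewrite expr0 scale1r map_mx_id // map_trmx At.
Qed.
End S.
Section S2.
Variable R : realType.
Local Notation C := (R[i]).
Local Notation toC := (real_complex R).
Local Notation "A ^c" := (map_mx toC A).
Local Open Scope sesquilinear_scope.

Lemma quadE n (A : 'M[R]_n) (v : 'cV[R]_n) :
  (v^T *m A *m v) 0 0 = \sum_l (\sum_k v k 0 * A k l) * v l 0.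
Proof. by rewrite !mxE; apply: eq_bigr => l _; rewrite !mxE; congr (_ * _); apply: eq_bigr => k _; rewrite !mxE. Qed.

Lemma toC_ge0 (x : R) : (0 <= toC x) = (0 <= x).
Proof. exact: ler0c. Qed.

Lemma toC_Re (z : C) : toC (complex.Re z) = 'Re z.
Proof. exact: complexRe. Qed.
Lemma toC_Im (z : C) : toC (complex.Im z) = 'Im z.
Proof. exact: complexIm. Qed.

Lemma psd_spectral n (A : 'M[R]_n) : psd A ->
  exists U : 'M[C]_n, exists e : 'rV[R]_n,
   [/\ U \is unitarymx, forall j, 0 <= e 0 j & A^c = U^t* *m diag_mx e^c *m U].
Proof.
move=> hA; have H := psd_herm hA.
have /orthomx_spectralP := hermitian_normalmx H.
set P := spectralmx _; set sp := spectral_diag _ => Ae.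
have Pu : P \is unitarymx := spectral_unitarymx _.
rewrite invmx_unitary // in Ae.
have spr := hermitian_spectral_diag_real H.
pose e := \row_j complex.Re (sp 0 j).
have spE : e^c = sp.
  apply/matrixP => i j; rewrite !mxE ord1 toC_Re.
  by apply/Creal_ReP; move/mxOverP: spr; apply.
exists P, e; split => //; last by rewrite spE.
move=> j; rewrite -toC_ge0.
have -> : toC (e 0 j) = 'Re ((P *m A^c *m P^t*) j j).
  rewrite -[LHS](Creal_ReP _ (toC_real _)); apply: congr1.
  rewrite [toC _](_ : _ = (diag_mx e^c) j j); last by rewrite !mxE eqxx mulr1n.
  rewrite spE Ae !mulmxA (unitarymxP Pu) mul1mx -!mulmxA (unitarymxP Pu) mulmx1.
  done.
pose x : 'cV[R]_n := \col_k complex.Re (P j k).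
pose y : 'cV[R]_n := \col_k complex.Im (P j k).
have -> : 'Re ((P *m A^c *m P^t*) j j) = toC ((x^T *m A *m x) 0 0 + (y^T *m A *m y) 0 0).
  rewrite rmorphD !quadE !rmorph_sum -big_split /= !mxE raddf_sum; apply: eq_bigr => l _.
  rewrite !mxE !rmorphM !rmorph_sum /= !mulr_suml -big_split raddf_sum; apply: eq_bigr => k _.
  rewrite !mxE !rmorphM /= !toC_Re !toC_Im mulrAC.
  rewrite (ReMr (toC_real _)) ReM Re_conj Im_conj.
  by rewrite mulrN opprK; ring.
by rewrite toC_ge0 addr_ge0 //; case: hA => _; apply.
Qed.
End S2.

Lemma rank_diag (F : fieldType) n (d : 'rV[F]_n) :
  \rank (diag_mx d) = (\sum_j (d ord0 j != 0%R))%N.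
Proof.
elim: n d => [|n IH] d; first by rewrite big_ord0 flatmx0 mxrank0.
move: d; rewrite -[n.+1]/(1 + n)%N => d; rewrite -[d]hsubmxK.
rewrite diag_mx_row rank_diag_block_mx IH big_split_ord /=; congr (_ + _)%N.
  rewrite big_ord1; set a := lsubmx _.
  have -> : diag_mx a = (a 0 0)%:M by apply/matrixP => i j; rewrite !ord1 !mxE.
  rewrite row_mxEl; have [->|a0] := eqVneq (a 0 0) 0; first by rewrite raddf0 mxrank0.
  by rewrite mxrank_unit ?a0 // unitmxE det_scalar expr1 unitfE.
by apply: eq_bigr => i _; rewrite row_mxEr.
Qed.

Lemma interp (F : fieldType) (f : F -> F) (s : seq F) :
  exists q : {poly F}, forall x, x \in s -> q.[x] = f x.
Proof.
elim: s => [|x s [q Hq]]; first by exists 0.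
pose p := \prod_(y <- s) ('X - y%:P).
have pE y : y \in s -> p.[y] = 0.
  move=> ys; rewrite /p horner_prod; apply/eqP; rewrite prodf_seq_eq0.
  apply/hasP; exists y => //=; by rewrite hornerXsubC subrr.
have [xs|xs] := boolP (x \in s).
  by exists q => z; rewrite inE => /orP[/eqP->|]; [exact: Hq|exact: Hq].
have px : p.[x] != 0.
  rewrite /p horner_prod prodf_seq_neq0; apply/allP => y ys /=.
  by rewrite hornerXsubC subr_eq0; apply: contra xs => /eqP->.
exists (q + ((f x - q.[x]) / p.[x]) *: p) => z; rewrite inE hornerD hornerZ.
case/orP => [/eqP->|zs]; first by rewrite divfK // addrC subrK.
by rewrite (pE z zs) mulr0 addr0 Hq.
Qed.

Lemma horner_mx_sym n (F : fieldType) (A : 'M[F]_n.+1) p : A^T = A -> (horner_mx A p)^T = horner_mx A p.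
Proof.
move=> At; elim/poly_ind: p => [|p c IH]; first by rewrite rmorph0 trmx0.
rewrite rmorphD rmorphM /= horner_mx_X horner_mx_C linearD /= trmx_mul IH At tr_scalar_mx.
by rewrite (comm_mx_horner _ (erefl (A *m A))).

Qed.

Section S3.
Variable R : realType.
Local Notation C := (R[i]).
Local Notation toC := (real_complex R).
Local Notation "A ^c" := (map_mx toC A).
Local Open Scope sesquilinear_scope.

Definition spec n (A : 'M[R]_n) (U : 'M[C]_n) (f : 'rV[R]_n) :=
  U \is unitarymx /\ A^c = U^t* *m diag_mx f^c *m U.

Lemma toC_inj : injective toC.
Proof. exact: complexI. Qed.

Lemma unitary_tc n (U : 'M[C]_n) : U \is unitarymx -> U^t* *m U = 1%:M.
Proof. by move/unitarymxP; apply: mulmx1C. Qed.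

Lemma spec_tr n (A : 'M[R]_n) U f : spec A U f -> \tr A = \sum_j f 0 j.
Proof.
move=> [Uu Ae]; apply: toC_inj; rewrite -trace_map_mx Ae mxtrace_mulC mulmxA.
by rewrite (unitarymxP Uu) mul1mx mxtrace_diag rmorph_sum; apply: eq_bigr => j _; rewrite mxE.
Qed.

Lemma spec_rank n (A : 'M[R]_n) U f : spec A U f -> \rank A = (\sum_j (f ord0 j != 0%R))%N.
Proof.
move=> [Uu Ae]; have Uunit := unitarymx_unit Uu.
rewrite -(mxrank_map toC) Ae mxrankMfree ?row_free_unit //.
rewrite -mxrank_tr trmx_mul mxrankMfree; last first.
  by rewrite row_free_unit unitmx_tr -invmx_unitary // unitmx_inv.
rewrite mxrank_tr rank_diag; apply: eq_bigr => j _; by rewrite mxE fmorph_eq0.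
Qed.

Lemma spec_sq n (A : 'M[R]_n) U f : spec A U f -> spec (A *m A) U (\row_j (f 0 j ^+ 2)).
Proof.
move=> [Uu Ae]; split => //; rewrite map_mxM Ae.
rewrite -!mulmxA (mulmxA U) (unitarymxP Uu) mul1mx (mulmxA (diag_mx _)) mulmx_diag.
by congr (_ *m (diag_mx _ *m _)); apply/rowP => j; rewrite !mxE rmorphXn expr2.
Qed.
End S3.


Section S4.
Variable R : realType.
Local Notation C := (R[i]).
Local Notation toC := (real_complex R).
Local Notation "A ^c" := (map_mx toC A).
Local Open Scope sesquilinear_scope.

Lemma spec_quad n (S : 'M[R]_n) U g (v : 'cV[R]_n) : spec S U g ->
  (forall j, 0 <= g 0 j) -> 0 <= (v^T *m S *m v) 0 0.
Proof.
move=> [Uu SE] g0; rewrite -toC_ge0.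
have -> : toC ((v^T *m S *m v) 0 0) = ((v^T *m S *m v)^c) 0 0 by rewrite [RHS]mxE.
set w := U *m v^c.
have -> : (v^T *m S *m v)^c = w^t* *m diag_mx g^c *m w.
  have -> : w^t* = (v^T)^c *m U^t*.
    by rewrite /w trmx_mul map_mxM !map_trmx mapc_conj.
  by rewrite !map_mxM SE /w !mulmxA.
rewrite mul_mx_diag !mxE sumr_ge0 // => l _; rewrite !mxE; set z := \sum_j _.
by rewrite mulrAC mulr_ge0 ?toC_ge0 // mulrC mul_conjC_ge0.
Qed.

Lemma psd_sqrt_ex n (A : 'M[R]_n) : psd A -> exists S, psd S /\ S *m S = A.
Proof.
case: n A => [|n] A hA.
  exists 0; split; last by apply/matrixP => -[].
  by split; [apply/matrixP => -[] | move=> v; rewrite [v]flatmx0 mulmx0 mxE].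
have [U [e [Uu e0 Ae]]] := psd_spectral hA.
have [q Hq] := interp (fun x : R => Num.sqrt x) [seq e 0 j | j <- enum 'I_n.+1].
pose g := \row_j Num.sqrt (e 0 j).
pose S := horner_mx A q.
have SE : spec S U g.
  split => //; rewrite /S map_horner_mx Ae -invmx_unitary //.
  rewrite horner_mx_uconjC ?unitarymx_unit // horner_mx_diag.
  congr (_ *m diag_mx _ *m _); apply/rowP => j; rewrite !mxE horner_map Hq //.
  by apply/mapP; exists j; rewrite ?mem_enum.
exists S; split; last first.
  apply: (@map_mx_inj _ _ toC); have [_ ->] := spec_sq SE; rewrite Ae.
  by congr (_ *m diag_mx _ *m _); apply/rowP => j; rewrite !mxE sqr_sqrtr.
split; first by apply: horner_mx_sym; case: hA.
by move=> v; apply: (spec_quad v SE) => j; rewrite mxE sqrtr_ge0.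
Qed.
End S4.

Section P.
Variable R : realType.

Lemma psd_facts n (A : 'M[R]_n) : psd A ->
  [/\ 0 <= \tr A, 0 <= \tr (A *m A), \tr (A *m A) <= \tr A ^+ 2,
      \tr A ^+ 2 <= (\rank A)%:R * \tr (A *m A) & \rank (A *m A) = \rank A].
Proof.
move=> hA; have [U [e [Uu e0 Ae]]] := psd_spectral hA.
have sp : spec A U e by [].
have sp2 := spec_sq sp.
have trA := spec_tr sp; have trAA := spec_tr sp2.
have -> : \tr (A *m A) = \sum_j e 0 j ^+ 2 by rewrite trAA; apply: eq_bigr => j _; rewrite mxE.
rewrite trA (spec_rank sp) (spec_rank sp2); split.
- by apply: sumr_ge0.
- by apply: sumr_ge0 => j _; rewrite sqr_ge0.
- exact: sum_sq_le.
- by rewrite natr_sum; apply: cs_supp.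
- by apply: eq_bigr => j _; rewrite mxE sqrf_eq0.
Qed.

Lemma psd_sqrtP n (A : 'M[R]_n) : psd A -> psd (psd_sqrt A) /\ psd_sqrt A *m psd_sqrt A = A.
Proof.
move=> hA; rewrite /psd_sqrt.
by have := xgetPex 0 (P := [set S : 'M[R]_n | psd S /\ S *m S = A]) (psd_sqrt_ex hA).
Qed.

Lemma psd_conj n (a B : 'M[R]_n) : psd a -> psd B -> psd (a *m B *m a).
Proof.
move=> [aT ha] [Bt hB]; split; first by rewrite !trmx_mul aT Bt mulmxA.
move=> v; have := hB (a *m v).
by rewrite trmx_mul aT !mulmxA.
Qed.

Lemma psd_gram m k (G : 'M[R]_(m, k)) : psd (G *m G^T).
Proof.
split; first by rewrite trmx_mul trmxK.
move=> v; rewrite -!mulmxA mulmxA.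
have -> : v^T *m G = (G^T *m v)^T by rewrite trmx_mul trmxK.
by rewrite mxE sumr_ge0 // => i _; rewrite !mxE -expr2 sqr_ge0.
Qed.

Lemma centering_sym M : (centering R M)^T = centering R M.
Proof. by rewrite /centering linearB linearZ /= trmx1 trmx_const. Qed.
End P.

Theorem mainTheorem4 (R : realType) (M Nx Ny : nat)
    (X : 'M[R]_(M, Nx)) (Y : 'M[R]_(M, Ny)) :
  centering R M *m X != 0 -> centering R M *m Y != 0 ->
  let KX := centering R M *m X *m X^T *m centering R M in
  let KY := centering R M *m Y *m Y^T *m centering R M in
  CKA KX KY / Num.sqrt ((\rank KX)%:R * (\rank KY)%:R) <= NBS KX KY ^+ 2 /\
  NBS KX KY ^+ 2 <= (minn (\rank KX) (\rank KY))%:R * CKA KX KY.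
Proof.
move=> _ _ KX KY.
have hA : psd KX.
  have -> : KX = (centering R M *m X) *m (centering R M *m X)^T.
    by rewrite /KX trmx_mul centering_sym !mulmxA.
  exact: psd_gram.
have hB : psd KY.
  have -> : KY = (centering R M *m Y) *m (centering R M *m Y)^T.
    by rewrite /KY trmx_mul centering_sym !mulmxA.
  exact: psd_gram.
have [pa aa] := psd_sqrtP hA; set a := psd_sqrt KX in pa aa *.
have hT := psd_conj pa hB.
have [ps ss] := psd_sqrtP hT; set s := psd_sqrt (a *m KY *m a) in ps ss *.
have tT : \tr (s *m s) = \tr (KX *m KY).
  by rewrite ss -aa mxtrace_mulC mulmxA.
have [sF sq qF Fr rss] := psd_facts ps.
have [tA0 qA0 qtA trA rAA] := psd_facts hA.
have [tB0 qB0 qtB trB rBB] := psd_facts hB.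
have [_ _ _ _ raa] := psd_facts pa.
have rs : (\rank s <= minn (\rank KX) (\rank KY))%N.
  rewrite leq_min -rss ss; apply/andP; split.
    by rewrite -aa raa; apply: leq_trans (mxrankM_maxl _ _) (mxrankM_maxl _ _).
  by rewrite -mulmxA; apply: leq_trans (mxrankM_maxr _ _) (mxrankM_maxl _ _).
rewrite /CKA /NBS /fidelity -/a -/s.
rewrite tT in sq qF Fr.
apply: (@final R _ _ _ _ _ _ _ _ (\rank s)%:R) => //; rewrite ?ler0n ?ler_nat //.
Qed.
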